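(* Let $n$ and $\ell$ be even positive integers. Then \[\max(n,\ell)\ge \binom{n}{2}-\left(\frac{n}{2}+k\right),\] where $k$ is the smallest nonnegative integer such that $\gcd(n-2k-1,\ell)=1$.
   Context: All graphs are finite and simple. Vertex labels lie in $\mathbb{Z}_\ell$ ($\ell\ge 2$). In the neighborhood Lights Out game on $G$, toggling a vertex $v$ adds $1$ (mod $\ell$) to the label of each vertex of the closed neighborhood $N[v]$; the game is won when all labels are $0$. $G$ is $N$-AW if the game can be won from every initial labeling. $\max(n,\ell)$ is the maximum number of edges of an $N$-AW graph on $n$ vertices. *)

(* Defs.v *)
From mathcomp Require Import all_boot all_order all_algebra.
Set Implicit Arguments. Unset Strict Implicit. Unset Printing Implicit Defensive.

Definition simple_graph (n : nat) (E : {set {set 'I_n}}) : bool :=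
  [forall e in E, #|e| == 2].

Definition in_closed_nbhd (n : nat) (E : {set {set 'I_n}}) (v u : 'I_n) : bool :=
  (u == v) || ([set u; v] \in E).

(* Labels live in Z_l, represented by 'I_l (residues 0..l-1).  Toggling v
   s times adds s (mod l) to every vertex of N[v]; since only the number of
   toggles mod l matters, toggle counts are taken in 'I_l as well. *)
Definition wins (n l : nat) (E : {set {set 'I_n}})
    (f t : {ffun 'I_n -> 'I_l}) : bool :=
  [forall u : 'I_n,
     (f u + \sum_(v : 'I_n) t v * in_closed_nbhd E v u) %% l == 0].

Definition N_AW (n l : nat) (E : {set {set 'I_n}}) : bool :=
  [forall f : {ffun 'I_n -> 'I_l}, exists t : {ffun 'I_n -> 'I_l}, wins E f t].

Definition maxNAW (n l : nat) : nat :=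
  \max_(E : {set {set 'I_n}} | simple_graph E && N_AW l E) #|E|.

(* Main.v *)
Require Import Defs.
From mathcomp Require Import all_boot all_order all_algebra zify ring.
Set Implicit Arguments. Unset Strict Implicit. Unset Printing Implicit Defensive.
Import GRing.Theory.

Definition Hb (h k : nat) (a b : nat) : bool :=
  (a + h == b) || (b + h == a) || ((a == 0) && (0 < b <= k)) || ((b == 0) && (0 < a <= k)).

Definition Eg m h k : {set {set 'I_m}} :=
  [set e | [exists u : 'I_m, exists v : 'I_m, [&& u != v, ~~ Hb h k u v & e == [set u; v]]]].

Lemma Hb_sym h k a b : Hb h k a b = Hb h k b a.
Proof.
rewrite /Hb; case: (a + h == b); case: (b + h == a); case: (a == 0); case: (b == 0);
  case: (0 < a <= k); case: (0 < b <= k) => //.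
Qed.

Lemma set2_eq (T : finType) (u v u' v' : T) : u != v -> [set u; v] = [set u'; v'] ->
  (u = u' /\ v = v') \/ (u = v' /\ v = u').
Proof.
move=> neq e.
have : v \in [set u'; v'] by rewrite -e set22.
have : u \in [set u'; v'] by rewrite -e set21.
rewrite !inE => /orP[] /eqP hu /orP[] /eqP hv; subst; auto.
- by rewrite eqxx in neq.
- by rewrite eqxx in neq.
Qed.

Lemma mem_Eg m h k (u v : 'I_m) : u != v -> ([set u; v] \in Eg m h k) = ~~ Hb h k u v.
Proof.
move=> neq; apply/idP/idP.
- rewrite inE => /existsP[u' /existsP[v' /and3P[n' hb /eqP e]]].
  case: (set2_eq neq e) => [[-> ->]|[-> ->]] //.
  by rewrite Hb_sym.
- move=> hb; rewrite inE; apply/existsP; exists u; apply/existsP; exists v.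
  by rewrite neq hb eqxx.
Qed.

Lemma nbhd_Eg m h k (u v : 'I_m) : 0 < h -> in_closed_nbhd (Eg m h k) v u = ~~ Hb h k u v.
Proof.
move=> h0; rewrite /in_closed_nbhd; case: (eqVneq u v) => [->|neq] /=.
  by symmetry; apply/negP; rewrite /Hb => H; lia.
exact: mem_Eg.
Qed.

Lemma simple_Eg m h k : simple_graph (Eg m h k).
Proof.
apply/forallP => e; apply/implyP; rewrite inE => /existsP[u /existsP[v /and3P[n' hb /eqP ->]]].
by rewrite cards2 n'.
Qed.

Lemma card_Eg m h k : m.+1 = h + h -> ('C(m.+1, 2) - (h + k) <= #|Eg m.+1 h k|)%N.
Proof.
move=> hm.
pose F := [set [set (inord i : 'I_m.+1); inord (i + h)] | i : 'I_h] :|: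
          [set [set (inord 0 : 'I_m.+1); inord i.+1] | i : 'I_k].
pose D := [set e : {set 'I_m.+1} | #|e| == 2].
have sub : D :\: F \subset Eg m.+1 h k.
  apply/subsetP => e; rewrite in_setD => /andP[nF]; rewrite inE => /cards2P[u [v [neq ee]]]; subst e.
  rewrite mem_Eg //; apply: contra nF.
  have half : forall a b : 'I_m.+1, (a + h == b) || ((a == 0 :> nat) && (0 < b <= k)) ->
      [set a; b] \in F.
    move=> a b /orP[] hab.
    + have ha : (a < h)%N by have := ltn_ord b; lia.
      apply/setUP; left; apply/imsetP; exists (Ordinal ha) => //.
      by congr [set _; _]; apply/val_inj; rewrite /= inordK //; have := ltn_ord b; lia.
    + have hb : (b.-1 < k)%N by lia.
      apply/setUP; right; apply/imsetP; exists (Ordinal hb) => //.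
      by congr [set _; _]; apply/val_inj; rewrite /= inordK //; have := ltn_ord b; lia.
  rewrite /Hb => /orP[/orP[/orP[hb|hb]|hb]|hb].
  - by apply: half; rewrite hb.
  - by rewrite setUC; apply: half; rewrite hb.
  - by apply: half; rewrite hb orbT.
  - by rewrite setUC; apply: half; rewrite hb orbT.
have cD : #|D| = 'C(m.+1, 2) by rewrite /D card_draws card_ord.
have cF : (#|F| <= h + k)%N.
  rewrite /F cardsU; apply: leq_trans (leq_subr _ _) _.
  apply: leq_add.
  - by apply: leq_trans (leq_imset_card _ _) _; rewrite card_ord.
  - by apply: leq_trans (leq_imset_card _ _) _; rewrite card_ord.
apply: leq_trans (subset_leq_card sub).
rewrite cardsD cD; apply: leq_sub2l.
by apply: leq_trans cF; apply: subset_leq_card; apply: subsetIr.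
Qed.
Lemma NAW_of_inj (m p : nat) (E : {set {set 'I_m}}) :
  (forall t : 'I_m -> 'Z_p.+2,
     (forall u, \sum_(v : 'I_m) t v * (in_closed_nbhd E v u)%:R = 0)%R ->
     forall v, t v = 0%R) ->
  N_AW p.+2 E.
Proof.
move=> H; apply/forallP => f; apply/existsP.
pose phi (t : {ffun 'I_m -> 'Z_p.+2}) : {ffun 'I_m -> 'Z_p.+2} :=
  [ffun u => \sum_(v : 'I_m) t v * (in_closed_nbhd E v u)%:R]%R.
have inj_phi : injective phi.
  move=> t1 t2 e; apply/ffunP => v; apply/eqP; rewrite -subr_eq0; apply/eqP.
  apply: (H (fun v => t1 v - t2 v)%R) => u.
  under eq_bigr do rewrite mulrBl.
  rewrite sumrB; have := congr1 (fun g : {ffun _ -> _} => g u) e; rewrite /phi !ffunE => ->.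
  by rewrite subrr.
have [psi phiK psiK] := injF_bij inj_phi.
exists (psi [ffun u => - (f u : 'Z_p.+2)]%R).
apply/forallP => u.
set t := psi _.
have ht : phi t = [ffun u => - (f u : 'Z_p.+2)]%R by rewrite /t psiK.
have := congr1 (fun g : {ffun _ -> _} => g u) ht; rewrite /phi !ffunE => hu.
set x := (_ + _)%N.
have : (x%:R : 'Z_p.+2)%R = 0%R.
  rewrite /x natrD natr_sum natr_Zp.
  rewrite (eq_bigr (fun v => t v * (in_closed_nbhd E v u)%:R)%R); last first.
    by move=> v _; rewrite natrM natr_Zp.
  by rewrite hu subrr.
move/(congr1 val); rewrite Zp_nat /=. by move=> ->.
Qed.

Lemma alg (R : comRingType) (S a b c : R) : ((a + b - c) * S = S * a + ((S - c * S) + (0 + S * b)) - S)%R.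
Proof. ring. Qed.

Lemma sum_not (R : ringType) (I : finType) (t : I -> R) (b : I -> bool) :
  (\sum_(v : I) t v * (~~ b v)%:R = \sum_v t v - \sum_v t v * (b v)%:R)%R.
Proof.
rewrite -sumrB; apply: eq_bigr => v _; case: (b v) => /=.
  by rewrite mulr0 mulr1 subrr.
by rewrite mulr0 mulr1 subr0.
Qed.

Lemma sum1 (R : ringType) (I : finType) (t : I -> R) (b : I -> bool) w :
  (forall v, b v = (v == w)) -> (\sum_(v : I) t v * (b v)%:R = t w)%R.
Proof.
move=> hb; rewrite (bigD1 w) //= hb eqxx mulr1 big1 ?addr0 // => v /negbTE hv.
by rewrite hb hv mulr0.
Qed.

Lemma sum2 (R : ringType) (I : finType) (t : I -> R) (b : I -> bool) w1 w2 :
  w1 != w2 ->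
  (forall v, b v = (v == w1) || (v == w2)) -> (\sum_(v : I) t v * (b v)%:R = t w1 + t w2)%R.
Proof.
move=> ne hb; rewrite (bigD1 w1) //= hb eqxx mulr1 (bigD1 w2) /=; last by rewrite eq_sym.
rewrite hb eqxx orbT mulr1 big1 ?addr0 // => v /andP[/negbTE h1 /negbTE h2].
by rewrite hb h1 h2 mulr0.
Qed.

Lemma key m h k p : m.+1 = h + h -> k < h -> coprime p.+2 (h + (h - k.+1) - k) ->
  forall t : 'I_m.+1 -> 'Z_p.+2,
     (forall u, \sum_(v : 'I_m.+1) t v * (in_closed_nbhd (Eg m.+1 h k) v u)%:R = 0)%R ->
     forall v, t v = 0%R.
Proof.
move=> hm kh cop t H.
have h0 : 0 < h by lia.
set S := (\sum_v t v)%R.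
have hE (u : 'I_m.+1) : (\sum_v t v * (Hb h k u v)%:R = S)%R.
  have := H u.
  rewrite (eq_bigr (fun v => t v * (~~ Hb h k u v)%:R)%R); last by move=> v _; rewrite nbhd_Eg.
  by rewrite sum_not => /eqP; rewrite subr_eq0 => /eqP <-.
have F1 a : a < h -> t (inord a) = S.
  move=> ha; rewrite -(hE (inord (a + h))); symmetry; apply: sum1; move=> v.
  have := ltn_ord v.
  rewrite -val_eqE /Hb /= !inordK; try lia;
  move=> lv; apply/idP/idP => ?; lia.
have F2 a : 0 < a <= k -> t (inord (a + h)) = 0%R.
  move=> ha.
  have e2 : (\sum_v t v * (Hb h k (inord a : 'I_m.+1) v)%:R = t (inord (a + h)) + t (inord 0))%R.
    apply: (@sum2 _ _ t (fun v => Hb h k (inord a : 'I_m.+1) v)); first by rewrite -val_eqE /= !inordK; lia.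
    move=> v; have := ltn_ord v.
    rewrite -!val_eqE /Hb /= !inordK; try lia;
    move=> lv; apply/idP/idP => ?; lia.
  have := hE (inord a); rewrite e2.
  rewrite (F1 0) // => e.
  by rewrite -(addrK S (t _)) e subrr.
have F3 a : k < a < h -> t (inord (a + h)) = S.
  move=> ha; rewrite -(hE (inord a)); symmetry; apply: sum1; move=> v.
  have := ltn_ord v.
  rewrite -val_eqE /Hb /= !inordK; try lia;
  move=> lv; apply/idP/idP => ?; lia.
have cnt : (\sum_(v : 'I_m.+1) ((0 < (v : nat) <= k) : nat)%:R = k%:R :> 'Z_p.+2)%R.
  rewrite -(big_mkord xpredT (fun i => ((0 < i <= k) : nat)%:R)%R).
  rewrite (big_cat_nat _ (n := k.+1)) /=; [|lia|lia].
  rewrite [X in (_ + X)%R](_ : _ = 0%R) ?addr0; last first.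
    rewrite big_nat_cond big1 // => i /andP[/andP[hi _] _].
    by rewrite (_ : (0 < i <= k) = false) //; lia.
  rewrite big_ltn // /= add0r.
  rewrite (eq_big_nat _ _ (F2 := fun _ => 1%R)); last by move=> i hi; rewrite (_ : (0 < i <= k) = true) //; lia.
  by rewrite sumr_const_nat subn1.
have F4 : t (inord h) = (S - k%:R * S)%R.
  have := hE (inord 0).
  rewrite (eq_bigr (fun v => t v * (v == inord h)%:R + S * ((0 < (v : nat) <= k) : nat)%:R)%R); last first.
    move=> v _; have := ltn_ord v; case: (boolP (0 < (v : nat) <= k)) => hv lv.
    + have -> : t v = S by rewrite -(inord_val v); apply: F1; lia.
      rewrite (_ : Hb h k (inord 0 : 'I_m.+1) v = true); last by rewrite /Hb inordK //; lia.
      rewrite (_ : (v == inord h) = false); last by rewrite -val_eqE /= inordK //; lia.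
      by rewrite /= mulr0 mulr1 add0r.
    + rewrite (_ : Hb h k (inord 0 : 'I_m.+1) v = (v == inord h)); last first.
        by rewrite -val_eqE /Hb /= !inordK //; try lia; apply/idP/idP => ?; lia.
      by rewrite /= mulr0 addr0.
  rewrite big_split /= (@sum1 _ _ t _ (inord h)) // -mulr_sumr cnt => e.
  by rewrite -{1}e mulrC addrK.
have Stot : S = (S *+ h + ((S - k%:R * S) + (0 + S *+ (h - k.+1))))%R.
  rewrite {1}/S.
  rewrite (eq_bigr (fun v : 'I_m.+1 => t (inord (v : nat)))); last by move=> v _; rewrite inord_val.
  rewrite -(big_mkord xpredT (fun i => t (inord i))) hm.
  rewrite (big_cat_nat _ (n := h)) /=; [|lia|lia].
  rewrite (eq_big_nat _ _ (F2 := fun _ => S)); last by move=> i hi; apply: F1; lia.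
  rewrite sumr_const_nat subn0; congr (_ + _)%R.
  rewrite -{1}(add0n h) big_addn addnK big_ltn // add0n F4.
  congr (_ + _)%R.
  rewrite (big_cat_nat _ (n := k.+1)) /=; [|lia|lia].
  rewrite (eq_big_nat _ _ (F2 := fun _ => 0%R)); last by move=> i hi; apply: F2; lia.
  rewrite sumr_const_nat mul0rn.
  rewrite (eq_big_nat _ _ (F2 := fun _ => S)); last by move=> i hi; apply: F3; lia.
  by rewrite sumr_const_nat.
set c := (h + (h - k.+1) - k)%N.
have ce : (c%:R * S = 0)%R.
  have -> : (c%:R * S = S *+ h + ((S - k%:R * S) + (0 + S *+ (h - k.+1))) - S :> 'Z_p.+2)%R.
    rewrite /c natrB; last lia.
    by rewrite natrD (alg S h%:R (h - k.+1)%:R k%:R) !mulr_natr.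
  by rewrite -Stot subrr.
have cu : ((c%:R : 'Z_p.+2) \is a GRing.unit)%R by rewrite unitZpE.
have S0 : S = 0%R by rewrite -(mulKr cu S) ce mulr0.
move=> v; rewrite -(inord_val v).
have lv := ltn_ord v.
case: (ltnP (v : nat) h) => hv; first by rewrite F1.
have -> : (v : nat) = (v - h + h)%N by lia.
case: (ltnP k (v - h)) => hv2; first by rewrite F3 //; lia.
case: (posnP (v - h)) => hv3.
  by rewrite hv3 add0n F4 S0 mulr0 subr0.
by rewrite F2 //; lia.
Qed.

Theorem proposition4p5 (n l k : nat) :
  0 < n -> ~~ odd n -> 0 < l -> ~~ odd l ->
  gcdz (n%:Z - 2 * k%:Z - 1) l%:Z = 1%N ->
  (forall j : nat, (j < k)%N -> gcdz (n%:Z - 2 * j%:Z - 1) l%:Z <> 1%N) ->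
  ('C(n, 2) - (n./2 + k) <= maxNAW n l)%N.
Proof.
case: n => [//|m] _ ne l0 le hg hmin.
set h := m.+1./2.
have hm : m.+1 = h + h.
  by have := odd_double_half m.+1; rewrite (negbTE ne) /= add0n -addnn.
have kh : k < h.
  rewrite ltnNge; apply/negP => hk.
  apply: (hmin (h - 1)); first lia.
  rewrite (_ : ((m.+1)%:Z - 2 * (h - 1)%:Z - 1)%R = 1%R); last lia.
  by rewrite /gcdz /= gcd1n.
case: l l0 le hg hmin => [|[|p]] // _ _ hg _.
have cop : coprime p.+2 (h + (h - k.+1) - k).
  move: hg; rewrite (_ : ((m.+1)%:Z - 2 * k%:Z - 1)%R = Posz (h + (h - k.+1) - k)); last lia.
  rewrite /gcdz /= => e.
  have e' : gcdn (h + (h - k.+1) - k) p.+2 = 1 by case: e.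
  by rewrite /coprime gcdnC e'.
apply: leq_trans (card_Eg k hm) _.
apply: (@leq_bigmax_cond _ (fun E : {set {set 'I_m.+1}} => simple_graph E && N_AW p.+2 E)
          (fun E => #|E|) (Eg m.+1 h k)).
rewrite simple_Eg /=.
apply: NAW_of_inj.
exact: (key hm kh cop).
Qed.
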